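(* Let $\mathcal{Y}=\{1,\dots,K\}$ and let $P,Q$ be a source and a target distribution on $\mathcal{X}\times\mathcal{Y}$ with label marginals $p(y),q(y)$, satisfying the label shift assumption $q(x\mid y)=p(x\mid y)$ for all $y$, and such that the likelihood ratios $w(y)=q(y)/p(y)$ are well defined and known for all $y\in\mathcal{Y}$. Let $\{(X_i,Y_i)\}_{i\in\mathcal{I}_1}$ be training data, and let $\widehat{\pi}:\mathcal{X}\to\Delta_K$ be a probabilistic predictor computed from the training data only. Let $(X_1,Y_1),\dots,(X_n,Y_n)$ (the calibration set $\mathcal{I}_2$) be i.i.d. from $P$, let $(X_{n+1},Y_{n+1})$ be drawn from $Q$ independently, and let $U_1,\dots,U_{n+1}$ be i.i.d. $\mathrm{Unif}([0,1])$ independent of everything else. Define, for $x\in\mathcal{X}$, $y\in\mathcal{Y}$, $u\in[0,1]$, $$\rho_y(x;\widehat{\pi})=\sum_{y'=1}^K \widehat{\pi}_{y'}(x)\,\mathbf{1}\{\widehat{\pi}_{y'}(x)>\widehat{\pi}_y(x)\},\qquad r(x,y,u;\widehat{\pi})=\rho_y(x;\widehat{\pi})+u\cdot\widehat{\pi}_y(x),$$ and $r_i=r(X_i,Y_i,U_i;\widehat{\pi})$ for $i=1,\dots,n$. For each $y\in\mathcal{Y}$ set $$\tilde p_i^w(y)=\frac{w(Y_i)}{\sum_{j=1}^n w(Y_j)+w(y)}\ (i=1,\dots,n),\qquad \tilde p_{n+1}^w(y)=\frac{w(y)}{\sum_{j=1}^n w(Y_j)+w(y)},$$ $$\tau^\star_w(y)=Q_{1-\alpha}\Big(\sum_{i=1}^n\tilde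 p_i^w(y)\,\delta_{r_i}+\tilde p_{n+1}^w(y)\,\delta_1\Big),$$ and define the prediction set $\mathcal{F}^{(w)}_{\tau^\star}(x,u;\widehat{\pi})=\{y\in\mathcal{Y}:\rho_y(x;\widehat{\pi})+u\cdot\widehat{\pi}_y(x)\le\tau^\star_w(y)\}$. Then for any $\alpha\in(0,1)$, $$\mathbb{P}\big(Y_{n+1}\in\mathcal{F}^{(w)}_{\tau^\star}(X_{n+1},U_{n+1};\widehat{\pi})\ \big|\ \{(X_i,Y_i)\}_{i\in\mathcal{I}_1}\big)\ge 1-\alpha.$$
   Context: $\Delta_K$ denotes the probability simplex in $\mathbb{R}^K$ and $\widehat{\pi}_y(x)$ is the $y$-th coordinate of $\widehat{\pi}(x)$. For a distribution $F$ on $\mathbb{R}$, $Q_\beta(F)=\inf\{z:F(z)\ge\beta\}$ denotes its $\beta$-quantile (with $F$ also denoting its CDF); $\delta_a$ is the point mass at $a$. *)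

(* Defs.v *)
From HB Require Import structures.
From mathcomp Require Import all_boot all_order all_algebra.
From mathcomp Require Import all_classical all_reals all_analysis.
Set Implicit Arguments. Unset Strict Implicit. Unset Printing Implicit Defensive.
Import Order.TTheory GRing.Theory Num.Theory.
Local Open Scope classical_set_scope.
Local Open Scope ring_scope.

(* Label space Y = {1,...,K+1}, represented as 'I_K.+1 (i.e. the number of
   classes is K.+1 >= 1), with the discrete sigma-algebra. *)
Definition label (K : nat) := 'I_K.+1.
HB.instance Definition _ K := Choice.on (label K).
HB.instance Definition _ K := isPointed.Build (label K) ord0.
HB.instance Definition _ K := @isMeasurable.Build default_measure_display
  (label K) discrete_measurable discrete_measurable0
  discrete_measurableC discrete_measurableU.

Section defs.
Context {R : realType} {d : measure_display} {X : measurableType d} {K : nat}.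

Definition label_marg (P : probability (X * label K)%type R) (y : label K) : R :=
  fine (P (setT `*` [set y])).

Definition lratio (P Q : probability (X * label K)%type R) (y : label K) : R :=
  label_marg Q y / label_marg P y.

(* label shift: q(x | y) = p(x | y) for every y, i.e. for every measurable A,
   Q(A x {y}) / q(y) = P(A x {y}) / p(y), written multiplicatively. *)
Definition label_shift (P Q : probability (X * label K)%type R) : Prop :=
  forall (A : set X) (y : label K), measurable A ->
    (Q (A `*` [set y]) * (label_marg P y)%:E = P (A `*` [set y]) * (label_marg Q y)%:E)%E.

Definition rho (pi : X -> label K -> R) (x : X) (y : label K) : R :=
  \sum_(y' | pi x y < pi x y') pi x y'.

Definition score (pi : X -> label K -> R) (x : X) (y : label K) (u : R) : R :=
  rho pi x y + u * pi x y.

Definition quantile (F : R -> R) (beta : R) : R := inf [set z | beta <= F z].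

Definition wcdf (n : nat) (w : label K -> R) (Ys : 'I_n -> label K)
    (rs : 'I_n -> R) (y : label K) (z : R) : R :=
  let S := \sum_(j < n) w (Ys j) + w y in
  \sum_(i < n) (w (Ys i) / S) * (rs i <= z)%R%:R + (w y / S) * (1 <= z)%R%:R.

Definition tau_star (n : nat) (alpha : R) (w : label K -> R) (Ys : 'I_n -> label K)
    (rs : 'I_n -> R) (y : label K) : R :=
  quantile (wcdf w Ys rs y) (1 - alpha).

Definition conf_set (n : nat) (alpha : R) (w : label K -> R) (pi : X -> label K -> R)
    (Ys : 'I_n -> label K) (rs : 'I_n -> R) (x : X) (u : R) : set (label K) :=
  [set y | rho pi x y + u * pi x y <= tau_star alpha w Ys rs y].

End defs.

Definition mutually_indep {R : realType} {dO : measure_display} {Om : measurableType dO}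
    {dT : measure_display} {T : measurableType dT} (Pr : probability Om R) (n : nat)
    (Zc : 'I_n -> Om -> T) (Zt : Om -> T) (Uc : 'I_n -> Om -> R) (Ut : Om -> R) : Prop :=
  forall (A : 'I_n -> set T) (At : set T) (B : 'I_n -> set R) (Bt : set R),
    (forall i, measurable (A i)) -> measurable At ->
    (forall i, measurable (B i)) -> measurable Bt ->
    Pr ((\bigcap_i (Zc i @^-1` A i)) `&` (Zt @^-1` At)
          `&` (\bigcap_i (Uc i @^-1` B i)) `&` (Ut @^-1` Bt))
    = (\prod_(i < n) Pr (Zc i @^-1` A i) * Pr (Zt @^-1` At)
        * \prod_(i < n) Pr (Uc i @^-1` B i) * Pr (Ut @^-1` Bt))%E.

(* Main.v *)
Require Import Defs.
From HB Require Import structures.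
From mathcomp Require Import all_boot all_order all_algebra.
From mathcomp Require Import all_classical all_reals all_analysis.
Import Order.TTheory GRing.Theory Num.Theory.
Local Open Scope classical_set_scope.
Local Open Scope ring_scope.
From mathcomp Require perm measurable_realfun.

Module Aux.
Import perm measurable_realfun.
Section det.
Context {R : realType}.

Lemma ler_b2R (a b : bool) : (a -> b) -> (a%:R <= b%:R :> R).
Proof. by case: a; case: b => //= h; have := h isT. Qed.

Lemma quant_char n (wv : 'I_n -> R) (wt : R) (r : 'I_n -> R) (s b : R) :
  (forall i, 0 <= wv i) -> 0 <= wt -> 0 < \sum_i wv i + wt -> 0 < b <= 1 ->
  (s <= inf [set z | b <= \sum_i (wv i / (\sum_j wv j + wt)) * (r i <= z)%R%:R
                          + (wt / (\sum_j wv j + wt)) * (1 <= z)%R%:R]) <->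
  (\sum_i wv i * (r i < s)%R%:R + wt * (1 < s)%R%:R < b * (\sum_j wv j + wt)).
Proof.
move=> wv0 wt0 S0 /andP[b0 b1].
set S := \sum_j wv j + wt.
set G := fun z => \sum_i wv i * (r i <= z)%R%:R + wt * (1 <= z)%R%:R.
have FG z : \sum_i (wv i / S) * (r i <= z)%R%:R + (wt / S) * (1 <= z)%R%:R = G z / S.
  rewrite /G mulrDl big_distrl /=; congr (_ + _).
    by apply: eq_bigr => i _; rewrite mulrAC.
  by rewrite mulrAC.
have E : [set z | b <= \sum_i (wv i / S) * (r i <= z)%R%:R + (wt / S) * (1 <= z)%R%:R]
    = [set z | b * S <= G z].
  apply/seteqP; split => z /=; rewrite FG.
    by rewrite ler_pdivlMr.
  by rewrite ler_pdivlMr.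
rewrite E.
have Gmono z1 z2 : z1 <= z2 -> G z1 <= G z2.
  move=> z12; rewrite /G; apply: lerD.
    apply: ler_sum => i _; apply: ler_wpM2l => //.
    by apply: ler_b2R => h; rewrite (le_trans h z12).
  by apply: ler_wpM2l => //; apply: ler_b2R => h; rewrite (le_trans h z12).
have ne : [set z | b * S <= G z] !=set0.
  exists (Num.max 1 (\big[Num.max/1]_i r i)) => /=.
  have -> : G (Num.max 1 (\big[Num.max/1]_i r i)) = S.
    rewrite /G /S; congr (_ + _).
      apply: eq_bigr => i _.
      by rewrite (_ : (r i <= _) = true) ?mulr1 // le_max (le_bigmax_cond _ _ (isT : predT i)) orbT.
    by rewrite le_max lexx /= mulr1.
  by rewrite ler_piMl // ltW.
have lb : has_lbound [set z | b * S <= G z].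
  exists (Num.min 1 (\big[Num.min/1]_i r i)) => z /= hz.
  rewrite leNgt; apply/negP => zlt.
  have : G z = 0.
    rewrite /G big1 ?add0r.
      rewrite (_ : (1 <= z) = false) ?mulr0 //.
      by apply/negbTE; rewrite -ltNge; apply: (lt_le_trans zlt); rewrite ge_min lexx.
    move=> i _; rewrite (_ : (r i <= z) = false) ?mulr0 //.
    apply/negbTE; rewrite -ltNge; apply: (lt_le_trans zlt).
    rewrite ge_min; apply/orP; right.
    exact: (bigmin_le_cond _ _ (isT : predT i)).
  move=> G0; move: hz; rewrite G0 leNgt => /negP; apply.
  by rewrite pmulr_rgt0.
split.
- move=> sinf; rewrite ltNge; apply/negP => Hge.
  pose z := Num.max (\big[Num.max/(s - 1)]_(i | r i < s) r i)
                    (if 1 < s then 1 else s - 1).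
  have zs : z < s.
    rewrite gt_max; apply/andP; split.
      apply: bigmax_lt; first by rewrite ltrBlDr ltrDl.
      by move=> i.
    by case: ifP => // _; rewrite ltrBlDr ltrDl.
  have Hz : b * S <= G z.
    apply: (le_trans Hge); rewrite /G; apply: lerD.
      apply: ler_sum => i _; apply: ler_wpM2l => //.
      by apply: ler_b2R => h; rewrite le_max (le_bigmax_cond _ _ h).
    by apply: ler_wpM2l => //; apply: ler_b2R => h; rewrite le_max h lexx orbT.
  have := le_trans sinf (ge_inf lb Hz).
  by rewrite leNgt zs.
- move=> Hlt; apply: lb_le_inf => // z /= hz.
  rewrite leNgt; apply/negP => zs.
  have : G z <= \sum_i wv i * (r i < s)%R%:R + wt * (1 < s)%R%:R.
    rewrite /G; apply: lerD.
      apply: ler_sum => i _; apply: ler_wpM2l => //.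
      by apply: ler_b2R => h; rewrite (le_lt_trans h zs).
    by apply: ler_wpM2l => //; apply: ler_b2R => h; rewrite (le_lt_trans h zs).
  move=> h; have := le_lt_trans (le_trans hz h) Hlt.
  by rewrite ltxx.
Qed.


Lemma bad_sum m (w : 'I_m -> R) (s : 'I_m -> R) (b : R) :
  (forall i, 0 <= w i) -> b <= 1 ->
  \sum_k w k * ((\sum_j w j == 0) ||
       (b * \sum_j w j <= \sum_i w i * (s i < s k)%R%:R))%R%:R
  <= (1 - b) * \sum_j w j.
Proof.
move=> w0 b1.
set W := \sum_j w j.
have W0 : 0 <= W by apply: sumr_ge0.
have [WE|Wn0] := eqVneq W 0.
  have wz k : w k = 0 by move: WE; rewrite /W => /psumr_eq0P; apply.
  by rewrite big1 ?WE ?mulr0 // => k _; rewrite wz mul0r.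
set B := fun k => b * W <= \sum_i w i * (s i < s k)%R%:R.
rewrite /=.
case: (pickP B) => [k0 Bk0|none]; last first.
  rewrite big1 ?mulr_ge0 ?subr_ge0 // => k _.
  by rewrite (_ : (b * W <= _) = false) ?mulr0 //; apply: none.
have [mm Bm minm] := @arg_minP _ _ _ k0 B s Bk0.
apply: (@le_trans _ _ (\sum_k w k * (~~ (s k < s mm))%R%:R)).
  apply: ler_sum => k _; apply: ler_wpM2l => //; apply: ler_b2R => Bk.
  by rewrite -leNgt; apply: minm.
have -> : \sum_k w k * (~~ (s k < s mm))%R%:R = W - \sum_k w k * (s k < s mm)%R%:R.
  rewrite /W -sumrB; apply: eq_bigr => k _.
  by case: (s k < s mm); rewrite /= ?mulr0 ?mulr1 ?subr0 ?subrr.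
by rewrite mulrBl mul1r lerB // Bm.
Qed.

End det.

Section setup.
Context (R : realType) (d : measure_display) (X : measurableType d) (K : nat)
  (P Q : probability (X * label K)%type R)
  (pi : X -> label K -> R)
  (dO : measure_display) (Om : measurableType dO) (Pr : probability Om R) (n : nat)
  (Zc : 'I_n -> Om -> (X * label K)%type) (Zt : Om -> (X * label K)%type)
  (Uc : 'I_n -> Om -> R) (Ut : Om -> R) (alpha : R).
Hypotheses (LS : label_shift P Q) (pP : forall y, 0 < label_marg P y)
  (pi0 : forall x y, 0 <= pi x y) (pi1 : forall x, \sum_y pi x y = 1)
  (mpi : forall y, measurable_fun setT (fun x => pi x y))
  (mZc : forall i, measurable_fun setT (Zc i)) (mZt : measurable_fun setT Zt)
  (mUc : forall i, measurable_fun setT (Uc i)) (mUt : measurable_fun setT Ut)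
  (lZc : forall i A, measurable A -> Pr (Zc i @^-1` A) = P A)
  (lZt : forall A, measurable A -> Pr (Zt @^-1` A) = Q A)
  (lUc : forall i B, measurable B -> Pr (Uc i @^-1` B) = uniform_prob (@ltr01 R) B)
  (lUt : forall B, measurable B -> Pr (Ut @^-1` B) = uniform_prob (@ltr01 R) B)
  (IND : mutually_indep Pr Zc Zt Uc Ut).

Local Notation ZT := (X * label K)%type.
Local Notation T := (ZT * R)%type.
Local Notation TT := (n.+1.-tuple T).
Local Notation w := (lratio P Q).
Local Notation Unif := (uniform_prob (@ltr01 R)).

Definition labset (c : label K) : set ZT := [set z | z.2 = c].

Lemma labset_m c : measurable (labset c).
Proof.
have -> : labset c = setT `*` [set c].
  by apply/seteqP; split => -[x y]; rewrite /labset /=; [move=> ->|move=> [_ ->]].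
by apply: measurableX.
Qed.

Lemma lm_ge0 (M : probability ZT R) y : 0 <= label_marg M y.
Proof. by rewrite /label_marg fine_ge0 // measure_ge0. Qed.

Lemma w_ge0 y : 0 <= w y.
Proof. by rewrite /lratio divr_ge0 // lm_ge0. Qed.

Lemma fin_prob {d'} {T' : measurableType d'} (M : probability T' R) {A} :
  measurable A -> M A = (fine (M A))%:E.
Proof.
move=> mA; rewrite fineK // ge0_fin_numE ?measure_ge0 //.
by apply: (le_lt_trans (probability_le1 M mA)); rewrite ltry.
Qed.

Lemma QwP {A c} : measurable A -> A `<=` labset c ->
  Q A = ((w c)%:E * P A)%E.
Proof.
move=> mA Ac.
have AE : A = ysection A c `*` [set c].
  apply/seteqP; split => [[x y] Axy|[x y] [/= h ->]].
    have yc : y = c by apply: Ac Axy.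
    by split => //=; rewrite /ysection /= inE -yc.
  by move: h; rewrite /ysection /= inE.
have mS : measurable (ysection A c) by apply: measurable_ysection.
have := @LS _ c mS; rewrite -AE.
have pc := pP c.
rewrite (fin_prob Q mA) (fin_prob P mA) -!EFinM => hh.
have h := EFin_inj hh.
congr (_%:E); rewrite /lratio mulrAC [label_marg Q c * _]mulrC -h mulfK //.
exact: lt0r_neq0.
Qed.


Definition Wf (j : 'I_n.+1) (om : Om) : T :=
  if unlift ord0 j is Some i then (Zc i om, Uc i om) else (Zt om, Ut om).
Definition V (om : Om) : TT := [tuple Wf j om | j < n.+1].
Definition rect (A : 'I_n.+1 -> set ZT) (B : 'I_n.+1 -> set R) : set TT :=
  [set v | forall j, A j (tnth v j).1 /\ B j (tnth v j).2].

Lemma tnthV om j : tnth (V om) j = Wf j om.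
Proof. by rewrite tnth_mktuple. Qed.

Lemma e6 (a b c e f : \bar R) :
  (a * (c * b) * e * f = c * (b * a) * (f * e))%E.
Proof.
by rewrite (muleC b a) (muleC f e) -!muleA muleCA.
Qed.

Lemma R1 A B c : (forall j, measurable (A j)) -> (forall j, measurable (B j)) ->
  A ord0 `<=` labset c ->
  Pr (V @^-1` rect A B) = ((w c)%:E * \prod_j P (A j) * \prod_j Unif (B j))%E.
Proof.
move=> mA mB Ac.
have -> : V @^-1` rect A B = (\bigcap_i (Zc i @^-1` A (lift ord0 i))) `&`
   (Zt @^-1` A ord0) `&` (\bigcap_i (Uc i @^-1` B (lift ord0 i))) `&` (Ut @^-1` B ord0).
  apply/seteqP; split => om /=.
  - move=> h; have h0 := h ord0; rewrite tnthV /Wf unlift_none /= in h0.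
    split; [split; [split|]|]; try by case: h0.
    + move=> i _ /=; have := h (lift ord0 i); rewrite tnthV /Wf liftK /=.
      by case.
    + move=> i _ /=; have := h (lift ord0 i); rewrite tnthV /Wf liftK /=.
      by case.
  - move=> [[[hA hZ] hB] hU] j; rewrite tnthV /Wf.
    case: unliftP => [i ->|->]; rewrite ?liftK ?unlift_none /=.
      by split; [apply: hA|apply: hB].
    by [].
rewrite IND // lZt // (QwP (mA ord0) Ac) lUt //.
under eq_bigr do rewrite lZc //.
under [X in (_ * _ * X * _)%E]eq_bigr do rewrite lUc //.
rewrite (big_ord_recl _ (fun j => P (A j))) (big_ord_recl _ (fun j => Unif (B j))).
exact: e6.
Qed.


Definition Gr : set (set TT) := [set S | exists A B, (forall j, measurable (A j)) /\
  (forall j, measurable (B j)) /\ S = rect A B].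

Lemma rect_m A B : (forall j, measurable (A j)) -> (forall j, measurable (B j)) ->
  measurable (rect A B).
Proof.
move=> mA mB.
have -> : rect A B = \bigcap_(j in setT) ((fun v => tnth v j) @^-1` (A j `*` B j)).
  by apply/seteqP; split => v /= h j; [move=> _|]; apply: h.
apply: fin_bigcap_measurable; first exact: finite_finset.
move=> j _; rewrite -[X in measurable X]setTI; apply: measurable_tnth => //.
exact: measurableX.
Qed.

Lemma GrI : setI_closed Gr.
Proof.
move=> S1 S2 [A1 [B1 [mA1 [mB1 ->]]]] [A2 [B2 [mA2 [mB2 ->]]]].
exists (fun j => A1 j `&` A2 j), (fun j => B1 j `&` B2 j); split.
  by move=> j; apply: measurableI.
split; first by move=> j; apply: measurableI.
apply/seteqP; split => v /=.
  by move=> [h1 h2] j; have [? ?] := h1 j; have [? ?] := h2 j.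
by move=> h; split => j; have [[? ?] [? ?]] := h j.
Qed.

Lemma GEN : @measurable _ TT = <<s Gr >>.
Proof.
apply/seteqP; split; last first.
  apply: smallest_sub; first exact: sigma_algebra_measurable.
  by move=> S [A [B [mA [mB ->]]]]; apply: rect_m.
apply: smallest_sub; first exact: smallest_sigma_algebra.
rewrite -bigcup_mkord_ord => S [i Ii [C mC <-]].
set j : 'I_n.+1 := inord i.
have H : preimage_set_system setT (fun v : TT => tnth v j) measurable `<=` <<s Gr >>.
  move=> _ [C' mC' <-].
  set Fam := [set C0 : set T | <<s Gr >> (setT `&` (fun v : TT => tnth v j) @^-1` C0)].
  suff : <<s [set A `*` B | A in @measurable _ ZT & B in @measurable _ R] >> `<=` Fam.
    by apply; rewrite -measurable_prod_measurableType.
  have [S0 SC SU] := @smallest_sigma_algebra _ setT Gr.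
  apply: smallest_sub.
    split.
    - by rewrite /Fam /= preimage_set0 setI0.
    - move=> A; rewrite /Fam /= => hA.
      have -> : setT `&` (fun v : TT => tnth v j) @^-1` (setT `\` A) =
          setT `\` (setT `&` (fun v : TT => tnth v j) @^-1` A).
        by rewrite !setTI !setTD preimage_setC.
      exact: SC.
    - move=> F hF; rewrite /Fam /= setTI preimage_bigcup.
      have := SU (fun k => setT `&` (fun v : TT => tnth v j) @^-1` F k) hF.
      by under eq_bigcupr do rewrite setTI.
  move=> _ [A' mA' [B' mB' <-]].
  apply: sub_sigma_algebra.
  exists (fun l => if l == j then A' else setT), (fun l => if l == j then B' else setT).
  split; first by move=> l; case: ifP.
  split; first by move=> l; case: ifP.
  apply/seteqP; split => v /=.
    move=> [_ [h1 h2]] l; case: eqP => [->|] //.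
  by move=> h; split => //; have := h j; rewrite eqxx.
by apply: H; exists C.
Qed.


Lemma mV : measurable_fun setT V.
Proof.
apply/measurable_fun_tnthP => j /=.
rewrite (_ : _ \o _ = Wf j); last by apply/funext => om /=; rewrite tnthV.
rewrite /Wf; case: (unlift ord0 j) => [i|]; exact: measurable_fun_pair.
Qed.

Lemma mVpre S : measurable S -> measurable (V @^-1` S).
Proof. by move=> mS; rewrite -(setTI (V @^-1` S)); apply: mV. Qed.

Definition sw (k : 'I_n.+1) (v : TT) : TT := [tuple tnth v (tperm ord0 k j) | j < n.+1].

Lemma tnth_sw k v j : tnth (sw k v) j = tnth v (tperm ord0 k j).
Proof. by rewrite tnth_mktuple. Qed.

Lemma sw_m k : measurable_fun setT (sw k).
Proof.
apply/measurable_fun_tnthP => j /=.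
rewrite (_ : _ \o _ = (fun v => tnth v (tperm ord0 k j))).
  exact: measurable_tnth.
by apply/funext => v /=; rewrite tnth_sw.
Qed.

Definition lab (j : 'I_n.+1) (v : TT) : label K := (tnth v j).1.2.

Definition Aab (k : 'I_n.+1) (a b : label K) (j : 'I_n.+1) : set ZT :=
  (if j == ord0 then labset a else setT) `&` (if j == k then labset b else setT).

Definition Cab k a b : set TT := rect (Aab k a b) (fun _ => setT).

Lemma Aab_m k a b j : measurable (Aab k a b j).
Proof. by apply: measurableI; case: ifP => _ //; apply: labset_m. Qed.

Lemma Cab_m k a b : measurable (Cab k a b).
Proof. by apply: rect_m => // j; apply: Aab_m. Qed.

Lemma rect_sw k A B : sw k @^-1` rect A B =
  rect (fun j => A (tperm ord0 k j)) (fun j => B (tperm ord0 k j)).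
Proof.
apply/seteqP; split => v /= h j.
  by have := h (tperm ord0 k j); rewrite tnth_sw tpermK.
by rewrite tnth_sw; have := h (tperm ord0 k j); rewrite tpermK.
Qed.

Lemma rectI A B A' B' : rect A B `&` rect A' B' =
  rect (fun j => A j `&` A' j) (fun j => B j `&` B' j).
Proof.
apply/seteqP; split => v /=.
  by move=> [h1 h2] j; have [? ?] := h1 j; have [? ?] := h2 j.
by move=> h; split => j; have [[? ?] [? ?]] := h j.
Qed.

Lemma EX k a b S : measurable S ->
  ((w b)%:E * Pr (V @^-1` (S `&` Cab k a b)) =
   (w a)%:E * Pr ((sw k \o V) @^-1` (S `&` Cab k a b)))%E.
Proof.
move=> mS.
have mswV : measurable_fun setT (sw k \o V).
  by apply: measurableT_comp; [exact: sw_m|exact: mV].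
have mD1 : measurable (V @^-1` Cab k a b).
  by rewrite -[X in measurable X]setTI; apply: mV => //; apply: Cab_m.
have mD2 : measurable ((sw k \o V) @^-1` Cab k a b).
  by rewrite -[X in measurable X]setTI; apply: mswV => //; apply: Cab_m.
pose Vm : {mfun Om >-> TT} := HB.pack V (isMeasurableFun.Build _ _ _ _ _ mV).
pose Wm : {mfun Om >-> TT} := HB.pack (sw k \o V) (isMeasurableFun.Build _ _ _ _ _ mswV).
pose m1 := mscale (NngNum (w_ge0 b)) (mrestr (distribution Pr Vm) (Cab_m k a b)).
pose m2 := mscale (NngNum (w_ge0 a)) (mrestr (distribution Pr Wm) (Cab_m k a b)).
have E1 S' : m1 S' = ((w b)%:E * Pr (V @^-1` (S' `&` Cab k a b)))%E by [].
have E2 S' : m2 S' = ((w a)%:E * Pr ((sw k \o V) @^-1` (S' `&` Cab k a b)))%E by [].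
rewrite -E1 -E2.
apply: (measure_unique Gr (fun=> setT) GEN GrI) => //.
- move=> _; exists (fun=> setT), (fun=> setT); split => //; split => //.
  by apply/seteqP; split.
- by apply/seteqP; split => // x _; exists 0%N.
- move=> _ [A [B [mA [mB ->]]]].
  apply: (@eq_trans _ _ ((w b)%:E * Pr (V @^-1` (rect A B `&` Cab k a b)))%E) => //.
  apply: (@eq_trans _ _ ((w a)%:E * Pr ((sw k \o V) @^-1` (rect A B `&` Cab k a b)))%E); last by [].
  rewrite rectI comp_preimage rect_sw.
  have mA' j : measurable (A j `&` Aab k a b j) by apply: measurableI => //; apply: Aab_m.
  have mB' j : measurable (B j `&` setT) by apply: measurableI.
  rewrite (R1 _ _ a) //; last by move=> z [_ [h _]].
  rewrite (R1 _ _ b) //; last first.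
    by rewrite /= tpermL => z [_ [_ h]]; move: h; rewrite eqxx.
  have pe (F : 'I_n.+1 -> \bar R) : (\prod_j F (tperm ord0 k j) = \prod_j F j)%E.
    by rewrite [RHS](reindex_inj (@perm_inj _ (tperm ord0 k))).
  rewrite (pe (fun j => P (A j `&` Aab k a b j))) (pe (fun j => Unif (B j `&` setT))).
  by rewrite !muleA (muleC (w b)%:E).
- move=> _; apply: (@le_lt_trans _ _ ((w b)%:E * Pr (V @^-1` (setT `&` Cab k a b)))%E) => //.
  rewrite (fin_prob Pr) -?EFinM ?ltry //.
  by rewrite -[X in measurable X]setTI; apply: mV => //; apply: measurableI => //; apply: Cab_m.
Qed.


Local Notation LT := {ffun 'I_n.+1 -> label K}.
Local Notation beta := (1 - alpha).

Definition sc (j : 'I_n.+1) (y : label K) (v : TT) : R :=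
  score pi (tnth v j).1.1 y (tnth v j).2.
Definition Wy (ys : LT) : R := \sum_j w (ys j).
Definition L (ys : LT) : set TT := rect (fun j => labset (ys j)) (fun _ => setT).
Definition badb (ys : LT) (k : 'I_n.+1) (v : TT) : bool :=
  (Wy ys == 0) || (beta * Wy ys <= \sum_i w (ys i) * (sc i (ys i) v < sc k (ys k) v)%R%:R).
Definition D ys k : set TT := L ys `&` [set v | badb ys k v].
Definition Sg (ys : LT) : R := \sum_(i < n) w (ys (lift ord0 i)) + w (ys ord0).
Definition Hb (ys : LT) (v : TT) : R :=
  \sum_(i < n) w (ys (lift ord0 i)) *
     (sc (lift ord0 i) (ys (lift ord0 i)) v < sc ord0 (ys ord0) v)%R%:R
  + w (ys ord0) * (1 < sc ord0 (ys ord0) v)%R%:R.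
Definition goodb (ys : LT) (v : TT) : bool :=
  if 0 < Sg ys then Hb ys v < beta * Sg ys else sc ord0 (ys ord0) v <= 0.
Definition Good ys : set TT := L ys `&` [set v | goodb ys v].

Lemma mtn1 j : measurable_fun setT (fun v : TT => (tnth v j).1).
Proof. by apply: measurableT_comp; [exact: measurable_fst|exact: measurable_tnth]. Qed.

Lemma mx j : measurable_fun setT (fun v : TT => (tnth v j).1.1).
Proof. by apply: measurableT_comp; [exact: measurable_fst|exact: mtn1]. Qed.

Lemma mu_ j : measurable_fun setT (fun v : TT => (tnth v j).2).
Proof. by apply: measurableT_comp; [exact: measurable_snd|exact: measurable_tnth]. Qed.

Lemma mrho y : measurable_fun setT (fun x => rho pi x y).
Proof.
rewrite /rho; under eq_fun do rewrite big_mkcond /=.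
apply: measurable_sum => y'.
by apply: measurable_fun_ifT; [exact: measurable_realfun.measurable_fun_ltr|exact: mpi|exact: measurable_cst].
Qed.

Lemma msc j y : measurable_fun setT (sc j y).
Proof.
rewrite /sc /score; apply: measurable_realfun.measurable_funD.
  exact: (measurableT_comp (mrho y) (mx j)).
apply: measurable_realfun.measurable_funM; first exact: mu_.
exact: (measurableT_comp (mpi y) (mx j)).
Qed.

Lemma mb2R (f : TT -> bool) : measurable_fun setT f ->
  measurable_fun setT (fun v => (f v)%:R : R).
Proof.
move=> mf; rewrite (_ : (fun v => _) = (fun v => if f v then 1 else 0)).
  by apply: measurable_fun_ifT => //; exact: measurable_cst.
by apply/funext => v; case: (f v).
Qed.

Lemma mbset (f : TT -> bool) : measurable_fun setT f -> measurable [set v | f v].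
Proof.
move=> mf; have := mf measurableT [set true] I; rewrite setTI.
by congr measurable; apply/seteqP; split => v /=.
Qed.

Lemma L_m ys : measurable (L ys).
Proof. by apply: rect_m => // j; apply: labset_m. Qed.

Lemma D_m ys k : measurable (D ys k).
Proof.
apply: measurableI; first exact: L_m.
apply: mbset; rewrite /badb; case: (Wy ys == 0) => /=.
  exact: measurable_cst.
apply: measurable_realfun.measurable_fun_ler; first exact: measurable_cst.
apply: measurable_sum => i; apply: measurable_realfun.measurable_funM; first exact: measurable_cst.
by apply: mb2R; apply: measurable_realfun.measurable_fun_ltr; apply: msc.
Qed.

Lemma Good_m ys : measurable (Good ys).
Proof.
apply: measurableI; first exact: L_m.
apply: mbset; rewrite /goodb; case: (0 < Sg ys).
  apply: measurable_realfun.measurable_fun_ltr; last exact: measurable_cst.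
  rewrite /Hb; apply: measurable_realfun.measurable_funD.
    apply: measurable_sum => i; apply: measurable_realfun.measurable_funM; first exact: measurable_cst.
    by apply: mb2R; apply: measurable_realfun.measurable_fun_ltr; apply: msc.
  apply: measurable_realfun.measurable_funM; first exact: measurable_cst.
  by apply: mb2R; apply: measurable_realfun.measurable_fun_ltr; [exact: measurable_cst|apply: msc].
by apply: measurable_realfun.measurable_fun_ler; [apply: msc|exact: measurable_cst].
Qed.


Definition swf (k : 'I_n.+1) (ys : LT) : LT := [ffun j => ys (tperm ord0 k j)].

Lemma swfK k : involutive (swf k).
Proof. by move=> ys; apply/ffunP => j; rewrite !ffunE tpermK. Qed.

Lemma Wy_swf k ys : Wy (swf k ys) = Wy ys.
Proof.
rewrite /Wy [RHS](reindex_inj (@perm_inj _ (tperm ord0 k))).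
by apply: eq_bigr => j _; rewrite ffunE.
Qed.

Lemma badb_sw ys k v : badb ys ord0 (sw k v) = badb (swf k ys) k v.
Proof.
rewrite /badb Wy_swf; congr (_ || (_ <= _)).
rewrite [LHS](reindex_inj (@perm_inj _ (tperm ord0 k))) /=.
by apply: eq_bigr => i _; rewrite !ffunE /sc !tnth_sw tpermK tpermL tpermR.
Qed.

Lemma sw_D ys k : sw k @^-1` D ys ord0 = D (swf k ys) k.
Proof.
rewrite /D preimage_setI /L rect_sw; congr (_ `&` _).
  by congr rect; apply/funext => j; rewrite ffunE.
by apply/seteqP; split => v /=; rewrite badb_sw.
Qed.

Lemma L_Cab (ys : LT) k : L ys `<=` Cab k (ys ord0) (ys k).
Proof.
move=> v h j; have [h1 _] := h j; split => //.
by rewrite /Aab; split; case: eqP => [Ej|_] //; rewrite -Ej.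
Qed.

Lemma KEY (ys : LT) (k : 'I_n.+1) : ((w (ys k))%:E * Pr (V @^-1` D ys ord0) =
   (w (ys ord0))%:E * Pr (V @^-1` D (swf k ys) k))%E.
Proof.
have := EX k (ys ord0) (ys k) _ (D_m ys ord0).
rewrite setIidl; last by move=> v [hL _]; apply: L_Cab.
by rewrite comp_preimage sw_D.
Qed.


Definition labs (om : Om) : LT := [ffun j => lab j (V om)].

Lemma labs_l om i : labs om (lift ord0 i) = (Zc i om).2.
Proof. by rewrite ffunE /lab tnthV /Wf liftK. Qed.

Lemma labs_0 om : labs om ord0 = (Zt om).2.
Proof. by rewrite ffunE /lab tnthV /Wf unlift_none. Qed.

Lemma sc_l om i y : sc (lift ord0 i) y (V om) = score pi (Zc i om).1 y (Uc i om).
Proof. by rewrite /sc tnthV /Wf liftK. Qed.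

Lemma sc_0 om y : sc ord0 y (V om) = score pi (Zt om).1 y (Ut om).
Proof. by rewrite /sc tnthV /Wf unlift_none. Qed.

Lemma L_labs om (ys : LT) : L ys (V om) <-> ys = labs om.
Proof.
split => [h|->].
  by apply/ffunP => j; rewrite ffunE /lab; have [h1 _] := h j; rewrite h1.
by move=> j; split => //; rewrite ffunE.
Qed.

Definition Ev : set Om := [set om | conf_set alpha w pi (fun i => (Zc i om).2)
                  (fun i => score pi (Zc i om).1 (Zc i om).2 (Uc i om))
                  (Zt om).1 (Ut om) (Zt om).2].

Hypothesis alpha01 : 0 < alpha < 1.

Lemma ev_char om : Ev om <-> goodb (labs om) (V om).
Proof.
have HS : Sg (labs om) = \sum_(i < n) w (Zc i om).2 + w (Zt om).2.
  by rewrite /Sg labs_0; under eq_bigr do rewrite labs_l.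
have HH : Hb (labs om) (V om) = \sum_(i < n) w (Zc i om).2 *
    (score pi (Zc i om).1 (Zc i om).2 (Uc i om) < score pi (Zt om).1 (Zt om).2 (Ut om))%R%:R
    + w (Zt om).2 * (1 < score pi (Zt om).1 (Zt om).2 (Ut om))%R%:R.
  by rewrite /Hb labs_0 sc_0; under eq_bigr do rewrite labs_l sc_l.
rewrite /goodb HS HH sc_0 labs_0 /Ev /conf_set /tau_star /quantile /wcdf /=.
have [a0 a1] := andP alpha01.
case: ifP => S0.
  apply: quant_char => //; first by move=> i; apply: w_ge0.
    exact: w_ge0.
  by apply/andP; split; [rewrite subr_gt0|rewrite lerBlDr lerDl ltW].
have S0' : \sum_(i < n) w (Zc i om).2 + w (Zt om).2 = 0.
  apply/eqP; rewrite eq_le leNgt S0 /=.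
  by apply: addr_ge0; [apply: sumr_ge0 => i _|]; apply: w_ge0.
rewrite S0' invr0.
have -> : [set z | beta <= \sum_(i < n) w (Zc i om).2 * 0 *
                (score pi (Zc i om).1 (Zc i om).2 (Uc i om) <= z)%R%:R +
             w (Zt om).2 * 0 * (1 <= z)%R%:R] = set0.
  apply/seteqP; split => z //= h.
  move: h; rewrite big1 ?add0r ?mulr0 ?mul0r //; last by move=> i _; rewrite mulr0 mul0r.
  by rewrite subr_le0 leNgt a1.
by rewrite inf0.
Qed.


Lemma rho_le1 x y : rho pi x y + pi x y <= 1.
Proof.
rewrite -(pi1 x) (bigD1 y) //= [rho _ _ _ + _]addrC lerD2l /rho big_mkcond [leRHS]big_mkcond /=.
apply: ler_sum => y' _; case: ifP => h; last by case: ifP.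
by rewrite (_ : (y' != y) = true) //; apply/negP => /eqP E; move: h; rewrite E ltxx.
Qed.

Lemma score_le1 x y u : u <= 1 -> score pi x y u <= 1.
Proof.
move=> u1; apply: le_trans (rho_le1 x y); rewrite /score lerD2l.
by rewrite ler_piMl.
Qed.

Lemma Wy_Sg (ys : LT) : Wy ys = Sg ys.
Proof. by rewrite /Wy /Sg big_ord_recl addrC. Qed.

Lemma Wy_ge0 (ys : LT) : 0 <= Wy ys.
Proof. by apply: sumr_ge0 => j _; apply: w_ge0. Qed.

Lemma incl om : Ut om <= 1 -> ~~ badb (labs om) ord0 (V om) -> goodb (labs om) (V om).
Proof.
move=> u1; rewrite /badb negb_or => /andP[Wn0]; rewrite -ltNge => h.
rewrite /goodb -Wy_Sg lt0r Wn0 Wy_ge0 /=.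
apply: le_lt_trans h; rewrite le_eqVlt; apply/orP; left; apply/eqP.
rewrite /Hb big_ord_recl ltxx mulr0 add0r.
rewrite (_ : (1 < sc ord0 (labs om ord0) (V om)) = false) ?mulr0 ?addr0 //.
by apply/negbTE; rewrite -leNgt sc_0; apply: score_le1.
Qed.

Lemma PART (F : LT -> set TT) : (forall ys, measurable (F ys)) ->
  (forall ys, F ys `<=` L ys) ->
  Pr (\bigcup_(ys in setT) (V @^-1` F ys)) = (\sum_ys Pr (V @^-1` F ys))%E.
Proof.
move=> mF FL; rewrite measure_fin_bigcup //.
- rewrite (fsbigE (index_enum _)) ?index_enum_uniq //.
    by under eq_bigl do rewrite in_setT.
  by move=> i _; rewrite mem_index_enum.
- exact: finite_finset.
- apply/trivIsetP => i j _ _ ij; apply/seteqP; split => // om [h1 h2].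
  move/FL/L_labs: h1 => h1; move/FL/L_labs: h2 => h2.
  by move: ij; rewrite h1 h2 eqxx.
- by move=> ys _; apply: mVpre.
Qed.

Lemma L0 (ys : LT) : w (ys ord0) = 0 -> Pr (V @^-1` L ys) = 0%E.
Proof.
move=> w0; apply/eqP; rewrite eq_le measure_ge0 ?andbT.
apply: (@le_trans _ _ (Pr (Zt @^-1` labset (ys ord0)))).
  apply: le_measure; rewrite ?inE.
  - by apply: mVpre; apply: L_m.
  - by rewrite -(setTI (Zt @^-1` _)); apply: mZt => //; apply: labset_m.
  - move=> om h; have [h1 _] := h ord0; move: h1; rewrite tnthV /Wf unlift_none.
    by [].
rewrite lZt; last exact: labset_m.
by rewrite (@QwP (labset (ys ord0)) (ys ord0) (labset_m _)) // w0 mul0e.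
Qed.


Lemma PW (ys : LT) : (\sum_k (w (ys k))%:E * Pr (V @^-1` D ys k) <=
   (alpha * Wy ys)%:E * Pr (V @^-1` L ys))%E.
Proof.
have iE (S : set TT) : measurable S ->
    Pr (V @^-1` S) = (\int[Pr]_om (\1_(V @^-1` S) om)%:E)%E.
  by move=> mS; rewrite integral_indic ?setIT //; apply: mVpre.
have mI (S : set TT) : measurable S ->
    measurable_fun setT (fun om => ((\1_(V @^-1` S) om : R)%:E)%E).
  by move=> mS; apply/measurable_EFinP; apply: measurable_indic; apply: mVpre.
have aW0 : 0 <= alpha * Wy ys.
  by rewrite mulr_ge0 ?Wy_ge0 // ltW // (andP alpha01).1.
have Zl (c : R) (S : set TT) : 0 <= c -> measurable S ->
    ((c%:E * Pr (V @^-1` S)) = \int[Pr]_om (c%:E * (\1_(V @^-1` S) om : R)%:E))%E.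
  move=> c0 mS; rewrite iE //; apply/esym; apply: ge0_integralZl_EFin;
    [exact: measurableT|by move=> om _; rewrite lee_fin indicE ler0n|exact: mI|exact: c0].
have -> : (\sum_k (w (ys k))%:E * Pr (V @^-1` D ys k) =
    \int[Pr]_om (\sum_k ((w (ys k))%:E * (\1_(V @^-1` D ys k) om : R)%:E)))%E.
  rewrite ge0_integral_sum //; last first.
    by move=> k om _; rewrite mule_ge0 // lee_fin ?w_ge0.
    by move=> k; apply: emeasurable_funM; [exact: measurable_cst|apply: mI; apply: D_m].
  by apply: eq_bigr => k _; rewrite (Zl _ _ (w_ge0 _) (D_m _ _)).
rewrite (Zl _ _ aW0 (L_m _)).
apply: ge0_le_integral => //.
- by move=> om _; apply: sume_ge0 => k _; rewrite mule_ge0 // lee_fin ?w_ge0.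
- apply: emeasurable_sum => k.
  by apply: emeasurable_funM; [exact: measurable_cst|apply: mI; apply: D_m].
- by apply: emeasurable_funM; [exact: measurable_cst|apply: mI; apply: L_m].
move=> om _.
have [hL|hL] := pselect (L ys (V om)); last first.
  rewrite big1; first by rewrite mule_ge0 // lee_fin // indicE ler0n.
  move=> k _; rewrite indicE memNset ?mulr0 ?mule0 //.
  by move=> [h _]; apply: hL.
have eD k : (om \in V @^-1` D ys k) = badb ys k (V om).
  apply/idP/idP => [/set_mem [_ h] //|h]; exact: mem_set.
under eq_bigr do rewrite indicE eD -EFinM.
rewrite sumEFin indicE mem_set // -EFinM mulr1 lee_fin.
have e : 1 - beta = alpha by rewrite opprB addrC subrK.
have := @bad_sum R n.+1 (fun j => w (ys j)) (fun i => sc i (ys i) (V om)) beta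
  (fun j => w_ge0 (ys j)).
rewrite e; apply.
by rewrite lerBlDr lerDl ltW // (andP alpha01).1.
Qed.


Definition p (ys : LT) k : R := fine (Pr (V @^-1` D ys k)).
Definition pl (ys : LT) : R := fine (Pr (V @^-1` L ys)).

Lemma PrD ys k : Pr (V @^-1` D ys k) = (p ys k)%:E.
Proof. by rewrite /p -fin_prob //; apply: mVpre; apply: D_m. Qed.

Lemma PrL ys : Pr (V @^-1` L ys) = (pl ys)%:E.
Proof. by rewrite /pl -fin_prob //; apply: mVpre; apply: L_m. Qed.

Lemma p_ge0 ys k : 0 <= p ys k.
Proof. by rewrite /p fine_ge0 // measure_ge0. Qed.

Lemma pl_ge0 ys : 0 <= pl ys.
Proof. by rewrite /pl fine_ge0 // measure_ge0. Qed.

Lemma KEYr (ys : LT) k : w (ys k) * p ys ord0 = w (ys ord0) * p (swf k ys) k.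
Proof. by have h := KEY ys k; rewrite !PrD -!EFinM in h; apply: EFin_inj h. Qed.

Lemma PWr (ys : LT) : \sum_k w (ys k) * p ys k <= alpha * Wy ys * pl ys.
Proof.
have h := PW ys; rewrite PrL -EFinM in h.
have e : (\sum_k (w (ys k))%:E * Pr (V @^-1` D ys k))%E = (\sum_k w (ys k) * p ys k)%:E.
  by rewrite -sumEFin; apply: eq_bigr => k _; rewrite PrD -EFinM.
by rewrite e lee_fin in h.
Qed.

Lemma SUMpl : \sum_ys pl ys = 1.
Proof.
have := PART L L_m (fun ys => @subset_refl _ (L ys)).
have -> : \bigcup_(ys in setT) (V @^-1` L ys) = setT.
  apply/seteqP; split => // om _; exists (labs om) => //.
  by apply/L_labs.
rewrite probability_setT => h.
have e : (\sum_ys Pr (V @^-1` L ys))%E = (\sum_ys pl ys)%:E.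
  by rewrite -sumEFin; apply: eq_bigr => ys _; rewrite PrL.
by rewrite e in h; apply/esym/EFin_inj.
Qed.

Lemma pD_le_pl ys k : p ys k <= pl ys.
Proof.
rewrite /p /pl fine_le //; first by rewrite PrD.
  by rewrite PrL.
apply: le_measure; rewrite ?inE.
- by apply: mVpre; apply: D_m.
- by apply: mVpre; apply: L_m.
- by move=> om [].
Qed.

Lemma Claim1 (ys : LT) :
  p ys ord0 = (Wy ys)^-1 * \sum_k w (ys ord0) * p (swf k ys) k.
Proof.
have [W0|Wn0] := eqVneq (Wy ys) 0.
  rewrite W0 invr0 mul0r.
  have w0 : w (ys ord0) = 0.
    by move: W0; rewrite /Wy => /psumr_eq0P; apply => // j _; apply: w_ge0.
  apply/eqP; rewrite eq_le p_ge0 andbT.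
  apply: le_trans (pD_le_pl _ _) _.
  by rewrite /pl L0.
under eq_bigr do rewrite -KEYr.
by rewrite -mulr_suml mulKf.
Qed.

Lemma swf_0 k (ys : LT) : swf k ys ord0 = ys k.
Proof. by rewrite ffunE tpermL. Qed.

Lemma MAIN : \sum_ys p ys ord0 <= alpha.
Proof.
under eq_bigr do rewrite Claim1 mulr_sumr.
rewrite exchange_big /=.
have step k : \sum_ys (Wy ys)^-1 * (w (ys ord0) * p (swf k ys) k) =
              \sum_ys (Wy ys)^-1 * (w (ys k) * p ys k).
  rewrite (reindex_inj (can_inj (swfK k))) /=.
  by apply: eq_bigr => ys _; rewrite Wy_swf swf_0 swfK.
under eq_bigr do rewrite step.
rewrite exchange_big /=.
under eq_bigr do rewrite -mulr_sumr.
apply: (@le_trans _ _ (\sum_ys alpha * pl ys)); last first.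
  by rewrite -mulr_sumr SUMpl mulr1.
apply: ler_sum => ys _.
have [W0|Wn0] := eqVneq (Wy ys) 0.
  by rewrite W0 invr0 mul0r mulr_ge0 ?pl_ge0 // ltW // (andP alpha01).1.
apply: (@le_trans _ _ ((Wy ys)^-1 * (alpha * Wy ys * pl ys))).
  by apply: ler_wpM2l; [rewrite invr_ge0 Wy_ge0|apply: PWr].
by rewrite (mulrC alpha) -mulrA mulKf.
Qed.


Lemma final : ((1 - alpha)%:E <= Pr Ev)%E.
Proof.
have EvE : Ev = \bigcup_(ys in setT) (V @^-1` Good ys).
  apply/seteqP; split => om.
  - move/ev_char => h; exists (labs om) => //; split => //; exact/L_labs.
  - move=> [ys _ [hL hg]]; apply/ev_char.
    by have e := (L_labs om ys).1 hL; rewrite -e.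
have mEv : measurable Ev.
  rewrite EvE; apply: fin_bigcup_measurable; first exact: finite_finset.
  by move=> ys _; apply: mVpre; apply: Good_m.
pose Bad := \bigcup_(ys in setT) (V @^-1` D ys ord0).
have mBad : measurable Bad.
  apply: fin_bigcup_measurable; first exact: finite_finset.
  by move=> ys _; apply: mVpre; apply: D_m.
have PBad : Pr Bad = (\sum_ys p ys ord0)%:E.
  rewrite /Bad (PART (fun ys => D ys ord0)); last 2 first.
  - by move=> ys; apply: D_m.
  - by move=> ys v [].
  by rewrite -sumEFin; apply: eq_bigr => ys _; rewrite PrD.
pose A := Ut @^-1` `[0%R, 1%R].
have mA : measurable A.
  by rewrite -(setTI A); apply: mUt => //; exact: measurable_itv.
have PA : Pr A = 1%E.
  rewrite lUt; last exact: measurable_itv.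
  by rewrite /uniform_prob integral_uniform_pdf1.
have AE : A `<=` Ev `|` Bad.
  move=> om; rewrite /A /= in_itv /= => /andP[_ u1].
  case: (boolP (badb (labs om) ord0 (V om))) => hb.
    by right; exists (labs om) => //; split => //; exact/L_labs.
  by left; apply/ev_char; exact: incl.
have h1 : (1 <= Pr Ev + Pr Bad)%E.
  rewrite -PA; apply: le_trans (measureU2 _ mEv mBad).
  by apply: le_measure; rewrite ?inE //; exact: measurableU.
move: h1; rewrite (fin_prob Pr mEv) PBad -EFinD !lee_fin => h1.
rewrite lerBlDr; apply: le_trans h1 _.
by rewrite lerD2l; exact: MAIN.
Qed.

End setup.
End Aux.

Theorem theorem2 (R : realType) (d : measure_display) (X : measurableType d) (K : nat)
  (P Q : probability (X * label K)%type R)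
  (pi : X -> label K -> R)
  (dO : measure_display) (Om : measurableType dO) (Pr : probability Om R) (n : nat)
  (Zc : 'I_n -> Om -> (X * label K)%type) (Zt : Om -> (X * label K)%type)
  (Uc : 'I_n -> Om -> R) (Ut : Om -> R) (alpha : R) :
  (* label shift, with well-defined likelihood ratios w(y) = q(y)/p(y) *)
  label_shift P Q ->
  (forall y, 0 < label_marg P y) ->
  (* pi-hat : X -> simplex, fixed (computed from the independent training data) *)
  (forall x y, 0 <= pi x y) ->
  (forall x, \sum_y pi x y = 1) ->
  (forall y, measurable_fun setT (fun x => pi x y)) ->
  (* random variables and their laws *)
  (forall i, measurable_fun setT (Zc i)) -> measurable_fun setT Zt ->
  (forall i, measurable_fun setT (Uc i)) -> measurable_fun setT Ut ->
  (forall i A, measurable A -> Pr (Zc i @^-1` A) = P A) ->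
  (forall A, measurable A -> Pr (Zt @^-1` A) = Q A) ->
  (forall i B, measurable B -> Pr (Uc i @^-1` B) = uniform_prob (@ltr01 R) B) ->
  (forall B, measurable B -> Pr (Ut @^-1` B) = uniform_prob (@ltr01 R) B) ->
  mutually_indep Pr Zc Zt Uc Ut ->
  0 < alpha < 1 ->
  ((1 - alpha)%:E <=
   Pr [set om | conf_set alpha (lratio P Q) pi
                  (fun i => (Zc i om).2)
                  (fun i => score pi (Zc i om).1 (Zc i om).2 (Uc i om))
                  (Zt om).1 (Ut om) (Zt om).2])%E.
Proof.
move=> LS pP pi0 pi1 mpi mZc mZt mUc mUt lZc lZt lUc lUt IND a01.
have h := @Aux.final R d X K P Q pi dO Om Pr n Zc Zt Uc Ut alpha.
have h1 := h LS pP pi0 pi1.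
have h2 := h1 mpi.
have h3 := h2 mZc mZt mUc mUt.
have h4 := h3 lZc lZt.
have h5 := h4 lUc lUt.
have h6 := h5 IND a01.
exact: h6.
Qed.
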